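(* Let $n\ge 1$ and $0\le r\le n$, and let $G_{n,r}$ be the simple graph on $V=\{0,1,\ldots,n\}$ obtained from the complete graph $K_{n+1}$ by deleting the $r$ edges $\{0,i\}$ for $n-r+1\le i\le n$. Then $\dim_{\mathbb K}\left(R_n/\mathcal{M}_{G_{n,r}}^{(1)}\right)=\det\left(\widetilde Q_{G_{n,r}}\right)$.
   Context: $\mathbb K$ is a field, $R_n=\mathbb K[x_1,\ldots,x_n]$. For a loopless multigraph $G$ on $V=\{0,1,\ldots,n\}$ with adjacency matrix $[a_{ij}]_{0\le i,j\le n}$ ($a_{ij}=a_{ji}$ = number of edges between $i$ and $j$, $a_{ii}=0$), and $\emptyset\ne A\subseteq[n]$, put $d_A(i)=\sum_{j\in V\setminus A}a_{ij}$ for $i\in A$, and $m_A=\prod_{i\in A}x_i^{d_A(i)}$. The $1$-skeleton ideal is $\mathcal{M}_G^{(1)}=\langle m_A:\emptyset\ne A\subseteq[n],\ |A|\le 2\rangle\subseteq R_n$. Writing $d_i=\sum_{j\in V}a_{ij}$, the truncated signless Laplace matrix $\widetilde Q_G$ is the $n\times n$ matrix with entries $(\widetilde Q_G)_{ii}=d_i$ and $(\widetilde Q_G)_{ij}=a_{ij}$ for $i\ne j$, $i,j\in[n]$ (i.e. $D+A(G)$ with row and column of the root $0$ deleted). *)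

(* Defs.v *)
From HB Require Import structures.
From mathcomp Require Import all_boot all_order all_algebra.
From mathcomp Require Import multinomials.mpoly.
Set Implicit Arguments. Unset Strict Implicit. Unset Printing Implicit Defensive.
Import GRing.Theory.
Local Open Scope ring_scope.

(* Vertices V = {0,...,n} are 'I_n.+1 (0 = root); the variable x_i (i in [n])
   is 'X_k with k : 'I_n, corresponding to vertex i = k+1 = lift ord0 k. *)
Definition vtx (n : nat) (k : 'I_n) : 'I_n.+1 := lift ord0 k.

(* A loopless multigraph is given by its adjacency function a (a i j = #edges). *)
Definition multigraph (n : nat) (a : 'I_n.+1 -> 'I_n.+1 -> nat) : Prop :=
  (forall i j, a i j = a j i) /\ (forall i, a i i = 0%N).

Definition dA (n : nat) (a : 'I_n.+1 -> 'I_n.+1 -> nat) (A : {set 'I_n}) (i : 'I_n) : nat :=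
  (\sum_(j : 'I_n.+1 | j \notin [set vtx k | k in A]) a (vtx i) j)%N.

Definition mA (K : fieldType) (n : nat) (a : 'I_n.+1 -> 'I_n.+1 -> nat) (A : {set 'I_n})
  : {mpoly K[n]} :=
  \prod_(i in A) 'X_i ^+ (dA a A i).

Definition in_skeleton1 (K : fieldType) (n : nat) (a : 'I_n.+1 -> 'I_n.+1 -> nat)
  (p : {mpoly K[n]}) : Prop :=
  exists f : {set 'I_n} -> {mpoly K[n]},
    p = \sum_(A : {set 'I_n} | (A != set0) && (#|A| <= 2)%N) f A * mA K a A.

(* dim_K (R_n / I) = d : there are d polynomials whose classes form a K-basis
   of the quotient R_n / I. *)
Definition quot_dim (K : fieldType) (n : nat) (I : {mpoly K[n]} -> Prop) (d : nat) : Prop :=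
  exists b : 'I_d -> {mpoly K[n]},
    (forall p : {mpoly K[n]}, exists c : 'I_d -> K,
        I (p - \sum_(i < d) c i *: b i)) /\
    (forall c : 'I_d -> K, I (\sum_(i < d) c i *: b i) -> forall i, c i = 0).

(* truncated signless Laplacian: D + A(G) with the root row/column deleted *)
Definition trunc_signless_laplacian (n : nat) (a : 'I_n.+1 -> 'I_n.+1 -> nat) : 'M[int]_n :=
  \matrix_(i < n, j < n)
    (if i == j then (\sum_(k : 'I_n.+1) a (vtx i) k)%:Z else (a (vtx i) (vtx j))%:Z).

Definition Gnr_adj (n r : nat) (i j : 'I_n.+1) : nat :=
  nat_of_bool ((i != j) &&
    ~~ (((i == ord0) && (n - r + 1 <= j)%N) || ((j == ord0) && (n - r + 1 <= i)%N))).

(* Main.v *)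
Require Import Defs.
From HB Require Import structures.
From mathcomp Require Import all_boot all_order all_algebra.
From mathcomp Require Import multinomials.mpoly.
From mathcomp Require Import zify.
Set Implicit Arguments. Unset Strict Implicit. Unset Printing Implicit Defensive.
Import GRing.Theory.
Local Open Scope ring_scope.

Definition eA n (a : 'I_n.+1 -> 'I_n.+1 -> nat) (A : {set 'I_n}) : 'X_{1..n} :=
  [multinom (if i \in A then dA a A i else 0%N) | i < n].
Definition gen n (A : {set 'I_n}) := (A != set0) && (#|A| <= 2)%N.
Definition std n a (m : 'X_{1..n}) : bool :=
  [forall A : {set 'I_n}, gen A ==> ~~ (eA a A <= m)%MM].

Lemma mA_eq (K : fieldType) n a (A : {set 'I_n}) : mA K a A = 'X_[eA a A].
Proof.
rewrite mpolyXE_id /mA (big_mkcond (fun i => i \in A)) /=.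
by apply: eq_bigr => i _; rewrite mnmE; case: (i \in A).
Qed.

Lemma coefMX0 (K : fieldType) n (p : {mpoly K[n]}) e m :
  ~~ (e <= m)%MM -> (p * 'X_[e])@_m = 0.
Proof.
move=> He; rewrite {1}(mpolyE p) mulr_suml raddf_sum /= big1 // => k _.
rewrite -scalerAl -mpolyXD mcoeffZ mcoeffX.
case: eqP => [Hk|_]; last by rewrite mulr0.
by move: He; rewrite -Hk lem_addl.
Qed.

Lemma ideal_coef (K : fieldType) n a (p : {mpoly K[n]}) m :
  in_skeleton1 a p -> std a m -> p@_m = 0.
Proof.
case=> f -> /forallP Hs; rewrite raddf_sum big1 // => A HA.
rewrite mA_eq; apply: coefMX0; have := Hs A; rewrite /gen HA; exact.
Qed.

Lemma ideal0 (K : fieldType) n a : in_skeleton1 a (0 : {mpoly K[n]}).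
Proof. by exists (fun _ => 0); rewrite big1 // => A _; rewrite mul0r. Qed.

Lemma idealD (K : fieldType) n a (p q : {mpoly K[n]}) :
  in_skeleton1 a p -> in_skeleton1 a q -> in_skeleton1 a (p + q).
Proof.
case=> f -> [g ->]; exists (fun A => f A + g A).
by rewrite -big_split /=; apply: eq_bigr => A _; rewrite mulrDl.
Qed.

Lemma idealX (K : fieldType) n a (c : K) (m : 'X_{1..n}) :
  ~~ std a m -> in_skeleton1 a (c *: 'X_[m]).
Proof.
move=> /forallPn [A]; rewrite negb_imply negbK => /andP [HA Hle].
exists (fun B => if B == A then c *: 'X_[m - eA a A] else 0).
rewrite (bigD1 A) //= eqxx big1 ?addr0; last first.
  by move=> B /andP [_ /negbTE ->]; rewrite mul0r.
by rewrite mA_eq -scalerAl -mpolyXD submK.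
Qed.

Lemma ideal_span (K : fieldType) n a (q : {mpoly K[n]}) :
  (forall m, std a m -> q@_m = 0) -> in_skeleton1 a q.
Proof.
move=> H; rewrite (mpolyE q) big_seq.
apply: (big_ind (in_skeleton1 a)); [exact: ideal0 | exact: idealD |].
move=> m Hm; apply: idealX; apply/negP => /H.
by apply/eqP; rewrite mcoeff_eq0 Hm.
Qed.


Definition mon n B (f : {ffun 'I_n -> 'I_B}) : 'X_{1..n} := [multinom (f i : nat) | i < n].

Lemma mon_inj n B : injective (@mon n B).
Proof.
move=> f g /mnmP H; apply/ffunP => i; apply/val_inj.
by have := H i; rewrite !mnmE.
Qed.

Definition Sset n a B := [set f : {ffun 'I_n -> 'I_B} | std a (mon f)].

Lemma quot_main (K : fieldType) n a B :
  (forall m, std a m -> forall i, (m i < B)%N) ->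
  quot_dim (@in_skeleton1 K n a) #|Sset a B|.
Proof.
move=> HB.
set S := Sset a B.
exists (fun i => 'X_[mon (enum_val i)]); split.
  move=> p; exists (fun i => p@_(mon (enum_val i))).
  apply: ideal_span => m Hm.
  pose f : {ffun 'I_n -> 'I_B} := [ffun i => Ordinal (HB m Hm i)].
  have Hf : m = mon f by apply/mnmP => i; rewrite !mnmE ffunE.
  have fS : f \in S by rewrite inE -Hf.
  have -> : \sum_(i < #|S|) p@_(mon (enum_val i)) *: 'X_[mon (enum_val i)] =
     \sum_(x in S) p@_(mon x) *: 'X_[mon x].
    by rewrite [RHS]big_enum_val.
  rewrite mcoeffB raddf_sum /=.
  rewrite (bigD1 f) //= big1 ?addr0.
    by rewrite mcoeffZ mcoeffX -Hf eqxx mulr1 subrr.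
  move=> g /andP [_ Hg]; rewrite mcoeffZ mcoeffX Hf.
  by rewrite (inj_eq (@mon_inj n B)) (negbTE Hg) mulr0.
move=> c Hc i.
have Hs : std a (mon (enum_val i)) by have := enum_valP i; rewrite inE.
have := ideal_coef Hc Hs; rewrite raddf_sum /= (bigD1 i) //= big1 ?addr0.
  by rewrite mcoeffZ mcoeffX eqxx mulr1.
move=> j Hj; rewrite mcoeffZ mcoeffX (inj_eq (@mon_inj n B)).
by rewrite (inj_eq enum_val_inj) (negbTE Hj) mulr0.
Qed.


Definition DJ (R : comRingType) n (e : 'I_n -> R) : 'M[R]_n :=
  \matrix_(i, j) ((i == j)%:R * e i + 1).

Lemma Hlift m (i : 'I_m) : (lift ord0 i == ord0 :> 'I_m.+1) = false.
Proof. by apply/negbTE; rewrite eq_sym neq_lift. Qed.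

Lemma Hlift' m (i : 'I_m.+1.-1) : (lift ord0 i == ord0 :> 'I_m.+1) = false.
Proof. by apply/negbTE; rewrite eq_sym neq_lift. Qed.

Lemma detDJ (R : comRingType) n (e : 'I_n -> R) :
  \det (DJ e) = \prod_j e j + \sum_i \prod_j (if j == i then 1 else e j).
Proof.
elim: n e => [|n IH] e.
  by rewrite det_mx00 big_ord0 big_ord0 addr0.
pose B : 'M[R]_n.+1 := \matrix_(i, j) (if i == ord0 then (j == ord0)%:R else DJ e i j).
pose C : 'M[R]_n.+1 := \matrix_(i, j) (if i == ord0 then 1 else DJ e i j).
rewrite (@determinant_multilinear _ _ (DJ e) B C ord0 (e ord0) 1); first last.
- by apply/matrixP => i j; rewrite !mxE Hlift.
- by apply/matrixP => i j; rewrite !mxE Hlift.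
- apply/rowP => j; rewrite !mxE eqxx /= mul1r eq_sym.
  by case: (j == ord0); rewrite /= ?mul1r ?mul0r ?mulr1 ?mulr0.
have detB : \det B = \det (DJ (fun i => e (lift ord0 i))).
  rewrite (expand_det_row _ ord0) big_ord_recl big1 ?addr0.
    rewrite !mxE eqxx mul1r /cofactor expr0 mul1r.
    congr (\det _); apply/matrixP => i j; rewrite !mxE Hlift'.
    by rewrite (inj_eq (@lift_inj _ ord0)).
  by move=> j _; rewrite !mxE Hlift mul0r.
pose L : 'M[R]_n.+1 := \matrix_(i, k) ((i == k)%:R + ((k == ord0) && (i != ord0))%:R).
pose C' : 'M[R]_n.+1 := \matrix_(i, j) (if i == ord0 then 1 else (i == j)%:R * e i).
have HC : C = L *m C'.
  apply/matrixP => i j; rewrite !mxE.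
  under eq_bigr => k _ do rewrite !mxE mulrDl.
  rewrite big_split /= (bigD1 i) //= big1; last first.
    by move=> k; rewrite eq_sym => /negbTE ->; rewrite mul0r.
  rewrite (bigD1 ord0) //= [X in _ = _ + (_ + X)]big1; last first.
    by move=> k /negbTE ->; rewrite mul0r.
  rewrite eqxx mul1r addr0 addr0 /=.
  by case: (i == ord0); rewrite /= ?mulr1 ?mulr0n ?mulr1n ?addr0.
have detL : \det L = 1.
  rewrite det_trig; last first.
    apply/is_trig_mxP => i k Hik; rewrite !mxE.
    have -> : (i == k) = false by apply/negP => /eqP E; move: Hik; rewrite E ltnn.
    have -> : (k == ord0) = false by apply/negP => /eqP E; move: Hik; rewrite E.
    by rewrite addr0.
  by rewrite big1 // => i _; rewrite !mxE eqxx andbN addr0.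
have detC' : \det C' = \prod_(j < n) e (lift ord0 j).
  rewrite -det_tr det_trig; last first.
    apply/is_trig_mxP => i k Hik; rewrite !mxE.
    have -> : (k == ord0) = false by apply/negP => /eqP E; move: Hik; rewrite E.
    have -> : (k == i) = false by apply/negP => /eqP E; move: Hik; rewrite E ltnn.
    by rewrite mul0r.
  rewrite big_ord_recl !mxE eqxx mul1r; apply: eq_bigr => i _.
  by rewrite !mxE Hlift eqxx mul1r.
rewrite detB HC det_mulmx detL detC' IH mul1r mulrDr mul1r.
rewrite [X in _ = X + _]big_ord_recl [X in _ = _ + X]big_ord_recl big_ord_recl eqxx mul1r.
have -> : \prod_(j < n) (if lift ord0 j == ord0 then 1 else e (lift ord0 j)) =
          \prod_(j < n) e (lift ord0 j).
  by apply: eq_bigr => j _.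
have -> : \sum_(i < n) \prod_(j < n.+1) (if j == lift ord0 i then 1 else e j) =
   e ord0 * \sum_(i < n) \prod_(j < n) (if j == i then 1 else e (lift ord0 j)).
  rewrite big_distrr /=; apply: eq_bigr => i _.
  rewrite big_ord_recl (negbTE (neq_lift _ _)); congr (_ * _).
by rewrite -addrA [X in _ + X = _]addrC.
Qed.

Local Close Scope ring_scope.

Lemma prod_bool (I : finType) (b : I -> bool) :
  (\prod_(j : I) (b j : nat) = [forall j, b j])%N.
Proof.
case: (boolP [forall j, b j]) => [/forallP H | /forallPn [j Hj]].
  by rewrite big1 // => j _; rewrite H.
by rewrite (bigD1 j) //= (negbTE Hj) mul0n.
Qed.

Lemma sum_bool_uniq (I : finType) (b : I -> bool) :
  (forall i k, b i -> b k -> i = k) ->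
  (\sum_(j : I) (b j : nat) = [exists j, b j])%N.
Proof.
move=> U; case: (boolP [exists j, b j]) => [/existsP [j Hj] | /existsPn H].
  rewrite (bigD1 j) //= Hj big1 ?addn0 // => k Hk.
  by case: (boolP (b k)) => // Hbk; rewrite (U _ _ Hbk Hj) eqxx in Hk.
by rewrite big1 // => j _; rewrite (negbTE (H j)).
Qed.

Definition stdb' n (x e : 'I_n -> nat) : bool :=
  [forall i, x i <= e i] &&
  [forall i, forall j, (i != j) ==> ~~((e i <= x i) && (e j <= x j))].

Definition Fq n (x e : 'I_n -> nat) (i j : 'I_n) : bool :=
  if j == i then x j == e j else x j < e j.

Lemma stdb'_count n (x e : 'I_n -> nat) :
  (stdb' x e : nat) =
  (\prod_j (x j < e j : nat) + \sum_i \prod_j (Fq x e i j : nat))%N.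
Proof.
rewrite prod_bool.
under eq_bigr => i _ do rewrite prod_bool.
rewrite sum_bool_uniq; last first.
  move=> i k /forallP Hi /forallP Hk; apply/eqP; apply/negPn/negP => Hik.
  have Hki : (k == i) = false by apply/negbTE; rewrite eq_sym.
  have := Hi k; have := Hk k; rewrite /Fq eqxx Hki => /eqP ->.
  by rewrite ltnn.
set P0 := [forall j, _]; set E := [exists j, _].
have HPE : ~~ (P0 && E).
  apply/andP => [[/forallP HP /existsP [i /forallP Hi]]].
  by have := Hi i; have := HP i; rewrite /Fq eqxx => H /eqP Heq; rewrite Heq ltnn in H.
suff -> : stdb' x e = P0 || E by case: P0 E HPE => [] [].
apply/idP/idP.
- case/andP => /forallP Hle /forallP Hp.
  case: (boolP P0) => //= /forallPn [i Hi].
  have Hxi : x i = e i by apply/eqP; rewrite eqn_leq Hle leqNgt Hi.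
  apply/existsP; exists i; apply/forallP => j; rewrite /Fq.
  case: eqP => [->|/eqP Hji]; first by rewrite Hxi.
  rewrite ltnNge; apply/negP => Hej.
  have := Hp i; move/forallP/(_ j)/implyP; rewrite eq_sym Hji => /(_ isT).
  by rewrite Hxi leqnn Hej.
- case/orP => [/forallP HP | /existsP [i /forallP Hi]]; apply/andP; split.
  + by apply/forallP => j; exact: ltnW (HP j).
  + apply/forallP => j; apply/forallP => k; apply/implyP => _.
    by rewrite leqNgt HP.
  + apply/forallP => j; have := Hi j; rewrite /Fq.
    by case: (j == i) => [/eqP ->|/ltnW].
  + apply/forallP => j; apply/forallP => k; apply/implyP => Hjk.
    case: (boolP (j == i)) => [/eqP Eji | Hji].
      have := Hi k; rewrite /Fq -Eji eq_sym (negbTE Hjk) => Hk.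
      by rewrite andbC leqNgt Hk.
    by have := Hi j; rewrite /Fq (negbTE Hji) => Hj; rewrite leqNgt Hj.
Qed.

Lemma sum_lt B e : (\sum_(k < B) (k < e : nat) = minn B e)%N.
Proof.
elim: B => [|B IH]; first by rewrite big_ord0 min0n.
by rewrite big_ord_recr /= IH; case: (ltnP B e) => H /=; lia.
Qed.

Lemma sum_eq B e : (\sum_(k < B) ((k == e :> nat) : nat) = (e < B))%N.
Proof.
elim: B => [|B IH]; first by rewrite big_ord0.
rewrite big_ord_recr /= IH ltnS leq_eqVlt.
by case: (ltngtP e B) => H /=; rewrite ?addn0 ?addn1 //; lia.
Qed.

Lemma count_ffun n B (e : 'I_n -> nat) : (forall j, e j < B) ->
  (\sum_(f : {ffun 'I_n -> 'I_B}) (stdb' (fun j => f j : nat) e : nat) =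
   \prod_j e j + \sum_i \prod_j (if j == i then 1 else e j))%N.
Proof.
move=> HB.
rewrite (eq_bigr _ (fun (f : {ffun 'I_n -> 'I_B}) _ => stdb'_count (fun j => f j : nat) e)).
rewrite big_split /=; congr (_ + _).
  rewrite -(bigA_distr_bigA (fun j (k : 'I_B) => (k < e j : nat))) /=.
  by apply: eq_bigr => j _; rewrite sum_lt (minn_idPr (ltnW (HB j))).
rewrite exchange_big /=; apply: eq_bigr => i _.
rewrite -(bigA_distr_bigA (fun j (k : 'I_B) =>
   ((if j == i then (k == e j :> nat) else (k < e j)) : nat))) /=.
apply: eq_bigr => j _; case: (j == i).
  by rewrite sum_eq HB.
by rewrite sum_lt (minn_idPr (ltnW (HB j))).
Qed.

Local Open Scope ring_scope.


Definition deg n (a : 'I_n.+1 -> 'I_n.+1 -> nat) (i : 'I_n) : nat :=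
  (\sum_k a (vtx i) k)%N.

Lemma vtx_inj n : injective (@vtx n).
Proof. exact: lift_inj. Qed.

Lemma dA1 n a (i : 'I_n) : a (vtx i) (vtx i) = 0%N -> dA a [set i] i = deg a i.
Proof.
move=> H0; rewrite /dA /deg imset_set1 [in RHS](bigD1 (vtx i)) // H0 /= add0n.
by apply: eq_bigl => j; rewrite in_set1.
Qed.

Lemma dA2 n a (i j : 'I_n) : i != j -> a (vtx i) (vtx i) = 0%N ->
  a (vtx i) (vtx j) = 1%N -> dA a [set i; j] i = (deg a i).-1.
Proof.
move=> Hij H0 H1; rewrite /dA /deg imsetU1 imset_set1 [in RHS](bigD1 (vtx i)) // H0 /= add0n.
rewrite [in RHS](bigD1 (vtx j)); last by rewrite eq_sym (inj_eq (@vtx_inj n)) Hij.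
rewrite H1 /=; apply: eq_bigl => k.
by rewrite !inE negb_or.
Qed.

Lemma eA_le n a (A : {set 'I_n}) (m : 'X_{1..n}) :
  (eA a A <= m)%MM = [forall k in A, dA a A k <= m k]%N.
Proof.
apply/mnm_lepP/forall_inP => H k.
  by move=> kA; have := H k; rewrite mnmE kA.
by rewrite mnmE; case: ifP => kA //; exact: H.
Qed.

Lemma std_char n a (m : 'X_{1..n}) :
  (forall i, a (vtx i) (vtx i) = 0%N) ->
  (forall i j, i != j -> a (vtx i) (vtx j) = 1%N) ->
  std a m = [forall i, m i < deg a i]%N &&
   [forall i, forall j, (i != j) ==> ~~(((deg a i).-1 <= m i) && ((deg a j).-1 <= m j))]%N.
Proof.
move=> H0 H1.
have Hne1 : forall i : 'I_n, [set i] != set0.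
  by move=> i; apply/set0Pn; exists i; rewrite set11.
apply/forallP/andP.
  move=> H; split.
    apply/forallP => i; have := H [set i]; rewrite /gen Hne1 cards1 /= eA_le.
    rewrite ltnNge; apply: contra => Hd; apply/forall_inP => k.
    by rewrite in_set1 => /eqP ->; rewrite dA1.
  apply/forallP => i; apply/forallP => j; apply/implyP => Hij.
  have := H [set i; j]; rewrite /gen cards2 Hij /=.
  have -> : [set i; j] != set0 by apply/set0Pn; exists i; rewrite !inE eqxx.
  rewrite /= eA_le; apply: contra => /andP [Hi Hj]; apply/forall_inP => k.
  have Hji : j != i by rewrite eq_sym.
  rewrite !inE => /orP [] /eqP ->; first by rewrite (dA2 Hij (H0 i) (H1 _ _ Hij)).
  by rewrite setUC (dA2 Hji (H0 j) (H1 _ _ Hji)).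
move=> [/forallP Hs /forallP Hp] A; apply/implyP => /andP [HA Hc].
rewrite eA_le; apply/negP => /forall_inP H.
have Hcard : (#|A| == 1)%N || (#|A| == 2)%N.
  by move: Hc; rewrite -card_gt0 in HA; move: HA; case: #|A| => [|[|[|]]].
move: H; case/orP: Hcard => [/cards1P [i ->] | /cards2P [i [j [Hij ->]]]] H.
  by have := H i (set11 i); rewrite (dA1 (H0 i)) leqNgt Hs.
have Hji : j != i by rewrite eq_sym.
have := H i; rewrite !inE eqxx (dA2 Hij (H0 i) (H1 _ _ Hij)) => /(_ isT) Hi.
have := H j; rewrite !inE eqxx orbT setUC (dA2 Hji (H0 j) (H1 _ _ Hji)) => /(_ isT) Hj.
by have := Hp i; move/forallP/(_ j); rewrite Hij Hi Hj.
Qed.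

Lemma card_S n a B :
  #|Sset a B| = (\sum_(f : {ffun 'I_n -> 'I_B}) (std a (mon f) : nat))%N.
Proof.
rewrite -sum1_card big_mkcond /=; apply: eq_bigr => f _.
by rewrite inE; case: (std a (mon f)).
Qed.

Lemma general (K : fieldType) n a :
  (forall i, a (vtx i) (vtx i) = 0%N) ->
  (forall i j, i != j -> a (vtx i) (vtx j) = 1%N) ->
  (forall i, 0 < deg a i)%N ->
  exists d : nat, quot_dim (@in_skeleton1 K n a) d /\
    d%:Z = \det (trunc_signless_laplacian a).
Proof.
move=> H0 H1 Hd.
pose B := (\sum_(i < n) deg a i)%N.
have HdB : forall i, (deg a i <= B)%N.
  by move=> i; rewrite /B (bigD1 i) //= leq_addr.
exists #|Sset a B|; split.
  apply: quot_main => m Hm i.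
  move: Hm; rewrite std_char // => /andP [/forallP Hs _].
  exact: leq_trans (Hs i) (HdB i).
pose e i := (deg a i).-1.
have HeB : forall j, (e j < B)%N.
  by move=> j; rewrite /e; have := Hd j; have := HdB j; lia.
rewrite card_S.
have -> : (\sum_(f : {ffun 'I_n -> 'I_B}) (std a (mon f) : nat) =
           \sum_(f : {ffun 'I_n -> 'I_B}) (stdb' (fun j => f j : nat) e : nat))%N.
  apply: eq_bigr => f _; rewrite std_char // /stdb'; congr (nat_of_bool (_ && _)).
    apply: eq_forallb => i; rewrite mnmE /e.
    by have := Hd i; lia.
  by apply: eq_forallb => i; apply: eq_forallb => j; rewrite !mnmE.
rewrite count_ffun //.
have -> : trunc_signless_laplacian a = DJ (fun i => (e i)%:Z).
  apply/matrixP => i j; rewrite !mxE.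
  case: (boolP (i == j)) => [/eqP ->|Hij]; first by rewrite /e /=; change ((deg a j)%:Z = 1 * ((deg a j).-1)%:Z + 1); rewrite mul1r -PoszD addn1 prednK ?Hd.
  by rewrite H1 //= mul0r add0r.
rewrite detDJ PoszD; congr (_ + _).
  by rewrite -natz natr_prod; apply: eq_bigr => j _; exact: natz.
rewrite -natz natr_sum; apply: eq_bigr => i _; rewrite natr_prod.
by apply: eq_bigr => j _; case: (j == i) => //; exact: natz.
Qed.


Lemma Gnr_H0 n r (i : 'I_n) : @Gnr_adj n r (vtx i) (vtx i) = 0%N.
Proof. by rewrite /Gnr_adj eqxx. Qed.

Lemma Gnr_H1 n r (i j : 'I_n) : i != j -> @Gnr_adj n r (vtx i) (vtx j) = 1%N.
Proof.
move=> Hij; rewrite /Gnr_adj (inj_eq (@vtx_inj n)) Hij /vtx !Hlift.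
by [].
Qed.

Lemma Gnr_Hd n r (i : 'I_n) : (1 < n)%N || (r == 0)%N -> (0 < deg (@Gnr_adj n r) i)%N.
Proof.
case/orP => [Hn | /eqP Hr].
  have [j Hj] : exists j : 'I_n, i != j.
    have H0 : (0 < n)%N by apply: ltnW.
    case: (boolP (i == Ordinal H0)) => [/eqP Hi|Hi]; last by exists (Ordinal H0).
    by exists (Ordinal Hn); rewrite Hi.
  by rewrite /deg (bigD1 (vtx j)) //= Gnr_H1.
rewrite /deg (bigD1 ord0) //=; apply: leq_trans (leq_addr _ _).
rewrite /Gnr_adj Hr subn0 /vtx Hlift /=.
have -> : (n + 1 <= bump 0 i)%N = false by rewrite /bump leq0n add1n addn1 ltnS leqNgt ltn_ord.
by [].
Qed.

Theorem proposition1 (K : fieldType) (n r : nat) (hn : (1 <= n)%N) (hr : (r <= n)%N) :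
  exists d : nat,
    quot_dim ((@in_skeleton1 K n (@Gnr_adj n r))) d /\
    d%:Z = \det (trunc_signless_laplacian (@Gnr_adj n r)).
Proof.
case: (boolP ((1 < n)%N || (r == 0)%N)) => Hc.
  apply: general; [exact: Gnr_H0 | exact: Gnr_H1 | move=> i; exact: Gnr_Hd].
have [En Er] : n = 1%N /\ r = 1%N by move: Hc; lia.
subst n r.
have Hdeg : deg (@Gnr_adj 1 1) ord0 = 0%N.
  by rewrite /deg big_ord_recl big_ord1.
have Hstd : forall m, ~~ std (@Gnr_adj 1 1) m.
  move=> m; rewrite std_char; [|exact: Gnr_H0|exact: Gnr_H1].
  apply/negP => /andP [/forallP /(_ ord0)]; rewrite Hdeg.
  by [].
exists #|Sset (@Gnr_adj 1 1) 1|; split.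
  by apply: quot_main => m Hm; move: (Hstd m); rewrite Hm.
have -> : #|Sset (@Gnr_adj 1 1) 1| = 0%N.
  by apply/eqP; rewrite cards_eq0; apply/eqP/setP => f; rewrite !inE (negbTE (Hstd _)).
rewrite det_mx11 mxE eqxx.
by change (0 = (deg (@Gnr_adj 1 1) ord0)%:Z); rewrite Hdeg.
Qed.
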